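(* Let $W$ be a finite Weyl group having a central involution $\tilde w$, and let $\tilde W=W\ltimes Z$ be the corresponding affine Weyl group. Suppose $x$ is an involution in $\tilde W$ of the form $x=(\tilde w,\mathbf u)$ for some $\mathbf u\in Z$, and let $X=x^{\tilde W}$ be the conjugacy class of $x$ in $\tilde W$. Then $\mathcal{C}(\tilde W,X)$ is disconnected.
   Context: $W$ is a finite Weyl group with root system $\Phi$ in a Euclidean space $V$, $\alpha^\vee=2\alpha/\langle\alpha,\alpha\rangle$, and $Z$ is the coroot lattice $L(\Phi^\vee)$ viewed as a group of translations. The affine Weyl group $\tilde W$ consists of pairs $(a,\mathbf u)$, $a\in W$, $\mathbf u\in Z$, with multiplication $(a,\mathbf u)(b,\mathbf v)=(ab,\mathbf u^b+\mathbf v)$, where $\mathbf u\mapsto\mathbf u^b$ is the (right) linear action of $W$ on $V$. $\mathcal{C}(G,X)$ is the graph on a set $X$ of involutions of $G$ with $x,y$ adjacent iff they commute. *)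

(* Defs.v *)
From HB Require Import structures.
From mathcomp Require Import all_boot all_order all_algebra.
From mathcomp Require Import reals.
From Stdlib Require Import Relation_Operators.
Set Implicit Arguments. Unset Strict Implicit. Unset Printing Implicit Defensive.
Import Order.TTheory GRing.Theory Num.Theory.
Local Open Scope ring_scope.

Section Defs.
Variables (R : realType) (n : nat).
Notation vec := 'rV[R]_n.
Notation mat := 'M[R]_n.

Definition dot (u v : vec) : R := (u *m v^T) 0 0.

Definition coroot (a : vec) : vec := (2 / dot a a) *: a.

(* reflection s_a : v |-> v - <v, a^vee> a, as a matrix acting on the right
   of row vectors *)
Definition refl (a : vec) : mat := 1%:M - (coroot a)^T *m a.

Definition root_system (Phi : seq vec) : Prop :=
  [/\ (0 : vec) \notin Phi,
      (forall v : vec, exists c : 'I_(size Phi) -> R,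
          v = \sum_(i < size Phi) c i *: Phi`_i),
      (forall a b, a \in Phi -> b \in Phi -> b *m refl a \in Phi),
      (forall a b, a \in Phi -> b \in Phi -> exists z : int, dot b (coroot a) = z%:~R)
    & (forall a (c : R), a \in Phi -> c *: a \in Phi -> c = 1 \/ c = -1)].

Definition weyl (Phi : seq vec) (w : mat) : Prop :=
  exists s : seq vec, all (fun a => a \in Phi) s /\
    w = foldr (fun a m => refl a *m m) 1%:M s.

Definition coroot_lattice (Phi : seq vec) (u : vec) : Prop :=
  exists c : 'I_(size Phi) -> int,
    u = \sum_(i < size Phi) (c i)%:~R *: coroot Phi`_i.

Definition aff := (mat * vec)%type.
Definition in_aff (Phi : seq vec) (g : aff) : Prop :=
  weyl Phi g.1 /\ coroot_lattice Phi g.2.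
(* (a,u)(b,v) = (ab, u^b + v) with u^b = u *m b *)
Definition aff_mul (g h : aff) : aff := (g.1 *m h.1, g.2 *m h.1 + h.2).
Definition aff_one : aff := (1%:M, 0).
Definition aff_inv (g : aff) : aff := (invmx g.1, - (g.2 *m invmx g.1)).

Definition conj_class (Phi : seq vec) (x y : aff) : Prop :=
  exists g, in_aff Phi g /\ y = aff_mul (aff_mul (aff_inv g) x) g.

Definition comm_adj (Phi : seq vec) (x : aff) (y z : aff) : Prop :=
  [/\ conj_class Phi x y, conj_class Phi x z, y <> z & aff_mul y z = aff_mul z y].

Definition comm_graph_disconnected (Phi : seq vec) (x : aff) : Prop :=
  exists y z, [/\ conj_class Phi x y, conj_class Phi x z &
                  ~ clos_refl_trans aff (comm_adj Phi x) y z].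
End Defs.

(* Main.v *)
Require Import Defs.
From HB Require Import structures.
From mathcomp Require Import all_boot all_order all_algebra.
From mathcomp Require Import reals.
From Stdlib Require Import Relation_Operators.
Import Order.TTheory GRing.Theory Num.Theory.
Local Open Scope ring_scope.
Section H.
Variables (R : realType) (n : nat).

Lemma dot_eq0 (a : 'rV[R]_n) : dot a a = 0 -> a = 0.
Proof.
rewrite /dot !mxE => H.
apply/rowP => j; rewrite mxE.
have H2 : forall j, true -> 0 <= a 0 j * a^T j 0.
  by move=> k _; rewrite mxE -expr2 sqr_ge0.
have := psumr_eq0P H2 H (i:=j) isT.
by rewrite mxE => /eqP; rewrite mulf_eq0 orbb => /eqP.
Qed.

Lemma refl_invol (a : 'rV[R]_n) : a != 0 -> refl a *m refl a = 1%:M.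
Proof.
move=> a0.
have d0 : dot a a != 0 by apply/eqP => /dot_eq0; apply/eqP.
have E : a *m (coroot a)^T = 2%:M.
  rewrite /coroot linearZ /= -scalemxAr (mx11_scalar (a *m a^T)).
  by rewrite -/(dot a a) -scalemx1 scalerA divfK // scalemx1.
rewrite /refl mulmxBl mul1mx mulmxBr mulmx1 mulmxA -(mulmxA _ a) E.
rewrite mul_mx_scalar -scalemxAl scaler_nat.
by rewrite mulr2n opprB addrK subrK.
Qed.

Lemma weyl_unit (Phi : seq 'rV[R]_n) w : root_system Phi -> weyl Phi w -> w \in unitmx.
Proof.
case=> P0 _ _ _ _ [s [Hs ->]].
elim: s Hs => [|a s IH] /=; first by rewrite unitmx1.
case/andP=> Ha Hs; rewrite unitmx_mul IH // andbT.
have a0 : a != 0 by apply: contraNneq P0 => <-.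
by case: (mulmx1_unit (@refl_invol a a0)).
Qed.

Lemma moved (Phi : seq 'rV[R]_n) (wt : 'M[R]_n) : root_system Phi -> wt <> 1%:M ->
  exists i : 'I_(size Phi), coroot Phi`_i *m wt != coroot Phi`_i.
Proof.
move=> RS wt1; have [P0 Hspan _ _ _] := RS.
case: (boolP [exists i : 'I_(size Phi), coroot Phi`_i *m wt != coroot Phi`_i]) => [/existsP//|/existsPn H].
exfalso; apply: wt1.
have Hr : forall i : 'I_(size Phi), Phi`_i *m wt = Phi`_i.
  move=> i; have := H i; rewrite negbK => /eqP.
  have a0 : Phi`_i != 0 by apply: contraNneq P0 => <-; exact: mem_nth.
  have d0 : dot Phi`_i Phi`_i != 0 by apply/eqP => /dot_eq0; apply/eqP.
  rewrite /coroot -scalemxAl; apply: scalerI.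
  by rewrite mulf_neq0 // ?invr_eq0 // pnatr_eq0.
have Hv : forall v : 'rV[R]_n, v *m wt = v.
  move=> v; have [c ->] := Hspan v.
  rewrite mulmx_suml; apply: eq_bigr => i _.
  by rewrite -scalemxAl Hr.
apply/row_matrixP => i.
by rewrite -[wt]mul1mx row_mul Hv.
Qed.
End H.

Lemma coroot_in (R : realType) (n : nat) (Phi : seq 'rV[R]_n) (i : 'I_(size Phi)) :
  coroot_lattice Phi (coroot Phi`_i).
Proof.
exists (fun j => ((j == i) : nat)%:Z).
rewrite (bigD1 i) //= eqxx /= scale1r big1 ?addr0 // => j /negPf ->.
by rewrite scale0r.
Qed.

Theorem lemma2p6 (R : realType) (n : nat) (Phi : seq 'rV[R]_n)
  (wt : 'M[R]_n) (u : 'rV[R]_n) :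
  root_system Phi ->
  weyl Phi wt ->
  (forall w, weyl Phi w -> wt *m w = w *m wt) ->
  wt *m wt = 1%:M -> wt <> 1%:M ->
  coroot_lattice Phi u ->
  aff_mul (wt, u) (wt, u) = aff_one R n ->
  comm_graph_disconnected Phi (wt, u).
Proof.
move=> RS Wwt Cen wt2 wt1 Lu _.
have conj1 : forall b, conj_class Phi (wt, u) b -> b.1 = wt.
  move=> b [g [[Wg _] ->]] /=.
  by rewrite -mulmxA Cen // mulKmx // (@weyl_unit _ _ _ _ RS Wg).
pose P (w : aff R n) := w.1 = wt /\ (w.2 - u) *m wt = w.2 - u.
have step : forall a b, comm_adj Phi (wt, u) a b -> P a -> P b.
  case=> [a1 p] [b1 q] [_ Cb _ E] [/= Ha Pa].
  have /= Hb := conj1 _ Cb; subst a1 b1; split => //=.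
  move/(congr1 snd): E => /= E.
  have E2 : (q - p) *m wt = q - p.
    rewrite mulmxBl; apply/eqP; rewrite subr_eq eq_sym addrAC subr_eq [q + _]addrC E //.
  have -> : q - u = (q - p) + (p - u) by rewrite addrA subrK.
  by rewrite mulmxDl E2 Pa.
have [i Hi] := @moved _ _ _ _ RS wt1.
set v := coroot Phi`_i.
have W1 : weyl Phi 1%:M by exists [::].
have L0 : coroot_lattice Phi (0 : 'rV[R]_n).
  by exists (fun _ => 0); rewrite big1 // => j _; rewrite scale0r.
exists (aff_mul (aff_mul (aff_inv (1%:M, 0)) (wt, u)) (1%:M, 0)).
exists (aff_mul (aff_mul (aff_inv (1%:M, v)) (wt, u)) (1%:M, v)).
split.
- by exists (1%:M, 0); split => //; split.
- by exists (1%:M, v); split => //; split => //; exact: coroot_in.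
move=> Hc.
have : P (aff_mul (aff_mul (aff_inv (1%:M, v)) (wt, u)) (1%:M, v)).
  have gen : forall a b, clos_refl_trans _ (comm_adj Phi (wt, u)) a b -> P a -> P b.
    move=> a b; elim => [a' b' /step|a'|a' b' c' _ IH1 _ IH2]; auto.
  apply: (gen _ _ Hc); rewrite /P /= invmx1 !mulmx1 oppr0 mul0mx add0r addr0.
  by rewrite mul1mx subrr mul0mx.
rewrite /P /= invmx1 !mulmx1 => -[_].
rewrite mulNmx.
have -> : - (v *m wt) + u + v - u = v - v *m wt by rewrite addrAC addrK addrC.
rewrite mulmxBl -mulmxA wt2 mulmx1 -opprB => /eqP.
rewrite eq_sym -subr_eq0 opprK -mulr2n -scaler_nat scaler_eq0 pnatr_eq0 /= subr_eq0 eq_sym.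
by move/negbTE: Hi => ->.
Qed.
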